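(* Let $\mathcal{A}\in\mathbb{C}^{n\times n\times n\times n}$ be a CPS tensor with orthogonal matrix decomposition $\mathcal{A}=\sum_{i=1}^r\lambda_iE_i\otimes\bar E_i$, where $r=rank_m(\mathcal{A})$, $0\ne\lambda_i\in\mathbb{R}$, $E_i$ complex symmetric, $\langle E_i,E_j\rangle=\delta_{ij}$. Then: (1) if every $E_i$ has rank one, then $\mathcal{A}=\sum_{i=1}^r\lambda_i' p_i\otimes p_i\otimes\bar p_i\otimes\bar p_i$ for some $\lambda_i'\in\mathbb{R}$, $p_i\in\mathbb{C}^n$ with $p_i^Hp_j=0$ for all $i\neq j$; (2) if $R=\max_i\operatorname{rank}(E_i)$, then $r\le\operatorname{rank}(\mathcal{A})\le rR^2$; (3) if $r=1$, i.e. $\mathcal{A}=\lambda E\otimes\bar E$ with $\lambda\ne0$, and $\operatorname{rank}(E)=R$, then $\operatorname{rank}(\mathcal{A})=R^2$. Here $\operatorname{rank}(\mathcal{A})$ denotes the CP rank over $\mathbb{C}$.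
   Context: A tensor $\mathcal{A}\in\mathbb{C}^{n\times n\times n\times n}$ is conjugate partial-symmetric (CPS) if $\mathcal{A}_{ijkl}=\overline{\mathcal{A}_{klij}}$ and $\mathcal{A}_{ijkl}=\mathcal{A}_{jikl}=\mathcal{A}_{ijlk}$ for all indices. For $E,F\in\mathbb{C}^{n\times n}$, $(E\otimes F)_{ijkl}=E_{ij}F_{kl}$; $\langle X,Y\rangle=\sum_{ij}X_{ij}\overline{Y_{ij}}$. $rank_m(\mathcal{A})=\min\{r:\mathcal{A}=\sum_{i=1}^r\lambda_iE_i\otimes\bar E_i,\ \lambda_i\in\mathbb{R},\ E_i=E_i^T\in\mathbb{C}^{n\times n}\}$. The CP rank $\operatorname{rank}(\mathcal{A})$ is the smallest $r$ with $\mathcal{A}=\sum_{i=1}^r u_i^1\otimes u_i^2\otimes u_i^3\otimes u_i^4$, $u_i^j\in\mathbb{C}^n$, where $(u\otimes v\otimes w\otimes z)_{ijkl}=u_iv_jw_kz_l$. *)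

(* Defs.v *)
From mathcomp Require Import all_boot all_order all_algebra.
From mathcomp Require Import complex.
Set Implicit Arguments. Unset Strict Implicit. Unset Printing Implicit Defensive.
Import Order.TTheory GRing.Theory Num.Theory.
Local Open Scope ring_scope.

(* Complex numbers are modelled as R[i] = complex R for a real closed field R
   (R = the reals gives C). *)

Definition tensor4 (K : Type) (n : nat) := 'I_n -> 'I_n -> 'I_n -> 'I_n -> K.

Section Defs.
Variable R : rcfType.
Local Notation C := (R[i]).

Definition CPS (n : nat) (A : tensor4 C n) : Prop :=
  forall i j k l,
    A i j k l = (A k l i j)^* /\ A i j k l = A j i k l /\ A i j k l = A i j l k.

Definition cmxconj (n : nat) (E : 'M[C]_n) : 'M[C]_n := map_mx Num.conj E.

Definition mxtens4 (n : nat) (E F : 'M[C]_n) : tensor4 C n :=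
  fun i j k l => E i j * F k l.

Definition mxinner (n : nat) (X Y : 'M[C]_n) : C :=
  \sum_(i < n) \sum_(j < n) X i j * (Y i j)^*.

Definition m_decomp (n r : nat) (A : tensor4 C n) : Prop :=
  exists (lam : 'I_r -> C) (E : 'I_r -> 'M[C]_n),
    (forall t, lam t \is Num.real) /\ (forall t, (E t)^T = E t) /\
    (forall i j k l, A i j k l = \sum_(t < r) lam t * mxtens4 (E t) (cmxconj (E t)) i j k l).

Definition is_rank_m (n : nat) (A : tensor4 C n) (r : nat) : Prop :=
  m_decomp r A /\ forall r', m_decomp r' A -> (r <= r')%N.

Definition vtens4 (n : nat) (u v w z : 'I_n -> C) : tensor4 C n :=
  fun i j k l => u i * v j * w k * z l.

Definition cp_decomp (n r : nat) (A : tensor4 C n) : Prop :=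
  exists u1 u2 u3 u4 : 'I_r -> 'I_n -> C,
    forall i j k l, A i j k l = \sum_(t < r) vtens4 (u1 t) (u2 t) (u3 t) (u4 t) i j k l.

Definition is_cp_rank (n : nat) (A : tensor4 C n) (k : nat) : Prop :=
  cp_decomp k A /\ forall k', cp_decomp k' A -> (k <= k')%N.

End Defs.

(* Main.v *)
Require Import Defs.
From mathcomp Require Import all_boot all_order all_algebra.
From mathcomp Require Import complex ring.
From Stdlib Require Import Classical.
Import Order.TTheory GRing.Theory Num.Theory.
Local Open Scope ring_scope.
Set Implicit Arguments. Unset Strict Implicit.

Section Aux.
Variable R : rcfType.
Local Notation C := (R[i]).
Lemma rank_bound (T : finType) (k : nat) (a : T -> 'I_k -> C) (b : 'I_k -> T -> C) :
  (forall x y, \sum_(t < k) a x t * b t y = (x == y)%:R) -> (#|T| <= k)%N.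
Proof.
move=> H.
pose M1 : 'M[C]_(#|T|, k) := \matrix_(i, t) a (enum_val i) t.
pose M2 : 'M[C]_(k, #|T|) := \matrix_(t, j) b t (enum_val j).
have E : M1 *m M2 = 1%:M.
  apply/matrixP=> i j; rewrite !mxE.
  under eq_bigr do rewrite !mxE.
  by rewrite H (inj_eq enum_val_inj).
rewrite -[X in (X <= _)%N](mxrank1 C #|T|) -E.
by apply: leq_trans (mxrankM_maxl _ _) (rank_leq_col _).
Qed.
Variable n : nat.

Definition pairm (W X : 'M[C]_n) : C := \sum_(i < n) \sum_(j < n) W i j * X i j.

Definition Phi (T : tensor4 C n) (W W' : 'M[C]_n) : C :=
  \sum_(i < n) \sum_(j < n) \sum_(k < n) \sum_(l < n) W i j * W' k l * T i j k l.

Lemma Phi_ext T1 T2 W W' : (forall i j k l, T1 i j k l = T2 i j k l) ->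
  Phi T1 W W' = Phi T2 W W'.
Proof.
move=> H; apply: eq_bigr => i _; apply: eq_bigr => j _; apply: eq_bigr => k _.
by apply: eq_bigr => l _; rewrite H.
Qed.

Lemma Phi_sum (I : finType) (F : I -> tensor4 C n) W W' :
  Phi (fun i j k l => \sum_(x : I) F x i j k l) W W' = \sum_(x : I) Phi (F x) W W'.
Proof.
rewrite /Phi; symmetry.
rewrite exchange_big; apply: eq_bigr => i _.
rewrite exchange_big; apply: eq_bigr => j _.
rewrite exchange_big; apply: eq_bigr => k _.
rewrite exchange_big; apply: eq_bigr => l _.
by rewrite big_distrr.
Qed.

Lemma Phi_scale (c : C) T W W' :
  Phi (fun i j k l => c * T i j k l) W W' = c * Phi T W W'.
Proof.
rewrite /Phi big_distrr; apply: eq_bigr => i _.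
rewrite big_distrr; apply: eq_bigr => j _.
rewrite big_distrr; apply: eq_bigr => k _.
rewrite big_distrr; apply: eq_bigr => l _.
by rewrite mulrCA.
Qed.

Lemma Phi_tens X Y W W' : Phi (mxtens4 X Y) W W' = pairm W X * pairm W' Y.
Proof.
rewrite /Phi /pairm big_distrl; apply: eq_bigr => i _.
rewrite big_distrl; apply: eq_bigr => j _.
rewrite big_distrr; apply: eq_bigr => k _.
rewrite big_distrr; apply: eq_bigr => l _.
by rewrite /mxtens4 /=; ring.
Qed.

Definition r1mx (f g : 'I_n -> C) : 'M[C]_n := \matrix_(i, j) (f i * g j).

Lemma vtens4_mx u1 u2 u3 u4 i j k l :
  vtens4 u1 u2 u3 u4 i j k l = mxtens4 (r1mx u1 u2) (r1mx u3 u4) i j k l.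
Proof. by rewrite /vtens4 /mxtens4 !mxE !mulrA. Qed.

Lemma pairm_r1 f g X : pairm (r1mx f g) X = \sum_(i < n) \sum_(j < n) f i * X i j * g j.
Proof.
apply: eq_bigr => i _; apply: eq_bigr => j _; rewrite /r1mx mxE; ring.
Qed.

Lemma pairm_r1r1 f g f' g' : pairm (r1mx f g) (r1mx f' g') =
  (\sum_(i < n) f i * f' i) * (\sum_(j < n) g j * g' j).
Proof.
rewrite pairm_r1 big_distrl; apply: eq_bigr => i _.
rewrite big_distrr; apply: eq_bigr => j _; rewrite /r1mx mxE /=; ring.
Qed.


Lemma sum3 (I J K : finType) (F : I -> J -> K -> C) :
  \sum_i \sum_j \sum_k F i j k = \sum_(x : I * J * K) F x.1.1 x.1.2 x.2.
Proof.
rewrite (pair_bigA _ (fun i j => \sum_k F i j k)).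
by rewrite (pair_bigA _ (fun p k => F p.1 p.2 k)).
Qed.

Lemma cp_from_fin (T : finType) (A : tensor4 C n) (f1 f2 f3 f4 : T -> 'I_n -> C) :
  (forall i j k l, A i j k l = \sum_(x : T) vtens4 (f1 x) (f2 x) (f3 x) (f4 x) i j k l) ->
  cp_decomp #|T| A.
Proof.
move=> H.
exists (fun t => f1 (enum_val t)), (fun t => f2 (enum_val t)),
       (fun t => f3 (enum_val t)), (fun t => f4 (enum_val t)).
move=> i j k l; rewrite H.
exact: (big_enum_val (fun x => vtens4 (f1 x) (f2 x) (f3 x) (f4 x) i j k l)).
Qed.

Lemma ebase_fact (E : 'M[C]_n) (Rk : nat) : (\rank E <= Rk)%N ->
  (col_ebase E *m pid_mx (\rank E) : 'M_(n, Rk)) *m (pid_mx (\rank E) *m row_ebase E) = E.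
Proof.
move=> h; rewrite mulmxA -[_ *m pid_mx _ *m pid_mx _]mulmxA pid_mx_id //.
exact: mulmx_ebase.
Qed.


Lemma cp_upper r (A : tensor4 C n) (lam : 'I_r -> C) (E : 'I_r -> 'M[C]_n) Rk :
  (forall t, \rank (E t) <= Rk)%N ->
  (forall i j k l, A i j k l = \sum_(t < r) lam t * mxtens4 (E t) (cmxconj (E t)) i j k l) ->
  cp_decomp (r * Rk * Rk) A.
Proof.
move=> hr H.
pose U t : 'M[C]_(n,Rk) := col_ebase (E t) *m pid_mx (\rank (E t)).
pose V t : 'M[C]_(Rk,n) := pid_mx (\rank (E t)) *m row_ebase (E t).
have EUV t : E t = U t *m V t by rewrite ebase_fact.
have card : #|{: 'I_r * 'I_Rk * 'I_Rk}| = (r * Rk * Rk)%N by rewrite !card_prod !card_ord.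
rewrite -card.
apply: (cp_from_fin (T := [the finType of ('I_r * 'I_Rk * 'I_Rk)%type])
   (f1 := fun x i => lam x.1.1 * U x.1.1 i x.1.2) (f2 := fun x j => V x.1.1 x.1.2 j)
   (f3 := fun x k => (U x.1.1 k x.2)^*) (f4 := fun x l => (V x.1.1 x.2 l)^*)).
move=> i j k l; rewrite H.
rewrite -(sum3 (fun t a b => vtens4 (fun i => lam t * U t i a) (V t a)
   (fun k => (U t k b)^*) (fun l => (V t b l)^*) i j k l)). apply: eq_bigr => t _.
rewrite /mxtens4 /cmxconj mxE (EUV t) !mxE rmorph_sum big_distrl big_distrr.
apply: eq_bigr => a _ /=; rewrite big_distrr big_distrr; apply: eq_bigr => b _ /=.
rewrite /vtens4 rmorphM /=; ring.
Qed.


Lemma pairm_conj_l (X Y : 'M[C]_n) : pairm (cmxconj Y) X = mxinner X Y.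
Proof.
apply: eq_bigr => i _; apply: eq_bigr => j _; by rewrite /cmxconj mxE mulrC.
Qed.

Lemma pairm_conj_r (X Y : 'M[C]_n) : pairm X (cmxconj Y) = mxinner X Y.
Proof.
apply: eq_bigr => i _; apply: eq_bigr => j _; by rewrite /cmxconj mxE.
Qed.

Lemma Phi_cp k (A : tensor4 C n) (u1 u2 u3 u4 : 'I_k -> 'I_n -> C) W W' :
  (forall i j k0 l, A i j k0 l = \sum_(t < k) vtens4 (u1 t) (u2 t) (u3 t) (u4 t) i j k0 l) ->
  Phi A W W' = \sum_(t < k) pairm W (r1mx (u1 t) (u2 t)) * pairm W' (r1mx (u3 t) (u4 t)).
Proof.
move=> H; rewrite (Phi_ext _ _ H) Phi_sum; apply: eq_bigr => t _.
by rewrite (Phi_ext _ _ (vtens4_mx _ _ _ _)) Phi_tens.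
Qed.

Lemma Phi_m r (A : tensor4 C n) (lam : 'I_r -> C) (E : 'I_r -> 'M[C]_n) W W' :
  (forall i j k l, A i j k l = \sum_(t < r) lam t * mxtens4 (E t) (cmxconj (E t)) i j k l) ->
  Phi A W W' = \sum_(t < r) lam t * (pairm W (E t) * pairm W' (cmxconj (E t))).
Proof.
move=> H; rewrite (Phi_ext _ _ H) Phi_sum; apply: eq_bigr => t _.
by rewrite (Phi_scale (lam t) (mxtens4 (E t) (cmxconj (E t)))) Phi_tens.
Qed.

Lemma lower2 r (A : tensor4 C n) (lam : 'I_r -> C) (E : 'I_r -> 'M[C]_n) k :
  (forall t, lam t != 0) ->
  (forall s t, mxinner (E s) (E t) = (s == t)%:R) ->
  (forall i j k l, A i j k l = \sum_(t < r) lam t * mxtens4 (E t) (cmxconj (E t)) i j k l) ->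
  cp_decomp k A -> (r <= k)%N.
Proof.
move=> hl ho H [u1 [u2 [u3 [u4 Hc]]]].
have key s t : \sum_(x < k) pairm (cmxconj (E t)) (r1mx (u1 x) (u2 x)) *
      pairm (E s) (r1mx (u3 x) (u4 x)) = lam s * (s == t)%:R.
  rewrite -(Phi_cp _ _ Hc) (Phi_m _ _ H) (bigD1 s) //= big1.
    by rewrite pairm_conj_l pairm_conj_r ho ho eqxx mulr1 addr0.
  move=> u /negbTE hu; by rewrite pairm_conj_r ho eq_sym hu mulr0 mulr0.
rewrite -[r]card_ord.
apply: (rank_bound (a := fun s x => pairm (E s) (r1mx (u3 x) (u4 x)) / lam s)
                   (b := fun x t => pairm (cmxconj (E t)) (r1mx (u1 x) (u2 x)))).
move=> s t.
have -> : \sum_(x < k) pairm (E s) (r1mx (u3 x) (u4 x)) / lam s *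
     pairm (cmxconj (E t)) (r1mx (u1 x) (u2 x)) =
   (\sum_(x < k) pairm (cmxconj (E t)) (r1mx (u1 x) (u2 x)) *
      pairm (E s) (r1mx (u3 x) (u4 x))) / lam s.
  rewrite big_distrl; apply: eq_bigr => x _ /=; ring.
by rewrite key mulrAC divff // mul1r.
Qed.


Lemma pairm_PXQ m (P : 'M[C]_(m, n)) (Q : 'M[C]_(n, m)) X a b :
  pairm (r1mx (fun i => P a i) (fun j => Q j b)) X = (P *m X *m Q) a b.
Proof.
rewrite pairm_r1 !mxE exchange_big; apply: eq_bigr => j _.
rewrite [(P *m X) a j]mxE big_distrl /=; apply: eq_bigr => i _; done.
Qed.

Lemma pairm_conj f g X :
  pairm (r1mx (fun i => (f i)^*) (fun j => (g j)^*)) (cmxconj X) = (pairm (r1mx f g) X)^*.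
Proof.
rewrite !pairm_r1 rmorph_sum; apply: eq_bigr => i _.
rewrite rmorph_sum; apply: eq_bigr => j _.
by rewrite /cmxconj mxE !rmorphM.
Qed.

Lemma lower3 (A : tensor4 C n) (lam : C) (E : 'M[C]_n) k :
  lam != 0 ->
  (forall i j k l, A i j k l = lam * mxtens4 E (cmxconj E) i j k l) ->
  cp_decomp k A -> (\rank E * \rank E <= k)%N.
Proof.
move=> hl H [u1 [u2 [u3 [u4 Hc]]]].
have /row_fullP [P hP] := col_base_full E.
have /row_freeP [Q hQ] := row_base_free E.
have PEQ : P *m E *m Q = 1%:M.
  by rewrite -[X in P *m X]mulmx_base mulmxA hP mul1mx hQ.
have key a b c d : \sum_(x < k)
    ((\sum_(i < n) P a i * u1 x i) * (\sum_(i < n) (P c i)^* * u3 x i)) *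
    ((\sum_(j < n) Q j b * u2 x j) * (\sum_(j < n) (Q j d)^* * u4 x j)) =
    lam * ((a == b)%:R * (c == d)%:R).
  pose W := r1mx (fun i => P a i) (fun j => Q j b).
  pose W' := r1mx (fun i => (P c i)^*) (fun j => (Q j d)^*).
  have e1 := Phi_cp W W' Hc.
  have e2 : Phi A W W' = lam * (pairm W E * pairm W' (cmxconj E)).
    by rewrite (Phi_ext _ _ H) (Phi_scale lam (mxtens4 E (cmxconj E))) Phi_tens.
  rewrite e2 /W /W' pairm_conj !pairm_PXQ PEQ !mxE rmorph_nat in e1.
  rewrite e1; apply: eq_bigr => x _.
  rewrite !pairm_r1r1; ring.
have hc : #|{: 'I_(\rank E) * 'I_(\rank E)}| = (\rank E * \rank E)%N by rewrite card_prod card_ord.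
rewrite -hc.
apply: (rank_bound
  (a := fun (x : 'I_(\rank E) * 'I_(\rank E)) t =>
     ((\sum_(i < n) P x.1 i * u1 t i) * (\sum_(i < n) (P x.2 i)^* * u3 t i)) / lam)
  (b := fun t (y : 'I_(\rank E) * 'I_(\rank E)) =>
     ((\sum_(j < n) Q j y.1 * u2 t j) * (\sum_(j < n) (Q j y.2)^* * u4 t j)))).
move=> [a c] [b d] /=.
have -> : \sum_(t < k) (\sum_(i < n) P a i * u1 t i) * (\sum_(i < n) (P c i)^* * u3 t i) / lam *
    ((\sum_(j < n) Q j b * u2 t j) * (\sum_(j < n) (Q j d)^* * u4 t j)) =
   (\sum_(t < k) ((\sum_(i < n) P a i * u1 t i) * (\sum_(i < n) (P c i)^* * u3 t i)) *
    ((\sum_(j < n) Q j b * u2 t j) * (\sum_(j < n) (Q j d)^* * u4 t j))) / lam.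
  rewrite big_distrl; apply: eq_bigr => x _ /=; ring.
rewrite key mulrAC divff // mul1r xpair_eqE.
by case: (a == b); case: (c == d); rewrite ?mul1r ?mul0r.
Qed.


Lemma cp_min (A : tensor4 C n) N : cp_decomp N A -> exists k, is_cp_rank A k /\ (k <= N)%N.
Proof.
elim: N {-2}N (leqnn N) => [|N IH] M hM hc.
  move: hM; rewrite leqn0 => /eqP hM; subst M.
  by exists 0%N; split.
case: (classic (exists k', cp_decomp k' A /\ (k' < M)%N)) => [[k' [hk' lt]]|hn].
  have [k [h1 h2]] := IH k' (leq_trans lt hM) hk'.
  by exists k; split => //; apply: leq_trans h2 (ltnW lt).
exists M; split => //; split => // k' hk'.
by rewrite leqNgt; apply/negP => lt; apply: hn; exists k'.
Qed.

Lemma inner_rep (X Y : 'M[C]_n) a b f g :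
  (forall i j, X i j = a * f i * f j) -> (forall i j, Y i j = b * g i * g j) ->
  mxinner X Y = a * b^* * (\sum_(i < n) f i * (g i)^*) ^+ 2.
Proof.
move=> hX hY; rewrite /mxinner expr2 big_distrl /= big_distrr /=; apply: eq_bigr => i _.
rewrite big_distrr big_distrr; apply: eq_bigr => j _ /=.
rewrite hX hY !rmorphM /=; ring.
Qed.


Lemma part1 r (A : tensor4 C n) (lam : 'I_r -> C) (E : 'I_r -> 'M[C]_n) :
  (forall t, lam t \is Num.real) ->
  (forall t, (E t)^T = E t) ->
  (forall s t, mxinner (E s) (E t) = (s == t)%:R) ->
  (forall i j k l, A i j k l = \sum_(t < r) lam t * mxtens4 (E t) (cmxconj (E t)) i j k l) ->
  (forall t, \rank (E t) = 1%N) ->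
      exists (lam' : 'I_r -> C) (p : 'I_r -> 'I_n -> C),
        (forall t, lam' t \is Num.real) /\
        (forall s t, s != t -> \sum_(k < n) (p s k)^* * p t k = 0) /\
        (forall i j k l, A i j k l =
           \sum_(t < r) lam' t * vtens4 (p t) (p t) (fun x => (p t x)^*) (fun x => (p t x)^*) i j k l).
Proof.
move=> hl hs ho H hrk.
pose U t : 'M[C]_(n,1) := col_ebase (E t) *m pid_mx (\rank (E t)).
pose V t : 'M[C]_(1,n) := pid_mx (\rank (E t)) *m row_ebase (E t).
have EUV t i j : E t i j = U t i 0 * V t 0 j.
  have e := @ebase_fact (E t) 1%N (eq_leq (hrk t)).
  by rewrite -{1}e mxE big_ord1.
pose v t (j : 'I_n) : C := V t 0 j.
pose u t (i : 'I_n) : C := U t i 0.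
have EUV' t i j : E t i j = u t i * v t j := EUV t i j.
pose al t : C := if [pick j | v t j != 0] is Some j0 then u t j0 / v t j0 else 0.
have Erep t i j : E t i j = al t * v t i * v t j.
  rewrite EUV' /al; case: pickP => [j0 hj0 | h0].
    have sym : u t i * v t j0 = u t j0 * v t i.
      have := congr1 (fun M : 'M[C]_n => M j0 i) (hs t); rewrite mxE /= !EUV' => ->.
      by [].
    rewrite -[u t i](mulfK hj0) sym /u /v; ring.
  have := negbFE (h0 j); rewrite /v => /eqP ->.
  by rewrite !mulr0.
have al0 t : al t != 0.
  apply/negP => /eqP h0.
  have := ho t t; rewrite (inner_rep (Erep t) (Erep t)) h0 !mul0r eqxx => /eqP.
  by rewrite eq_sym oner_eq0.
exists (fun t => lam t * (al t * (al t)^*)), v.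
split.
  move=> t; apply: rpredM => //; rewrite -normCK; apply: rpredX; exact: normr_real.
split.
  move=> s t hst.
  have := ho s t; rewrite (negbTE hst) (inner_rep (Erep s) (Erep t)) => /eqP.
  rewrite !mulf_eq0 conjC_eq0 (negbTE (al0 s)) (negbTE (al0 t)) /= orbb => /eqP hS.
  have : (\sum_(i < n) v s i * (v t i)^*)^* = 0 by rewrite hS rmorph0.
  move=> e; apply: (etrans _ e).
  rewrite rmorph_sum; apply: eq_bigr => i _.
  by rewrite rmorphM /= (conjCK (v t i)).
move=> i j k l; rewrite H; apply: eq_bigr => t _.
rewrite /mxtens4 /cmxconj mxE !Erep /vtens4 !rmorphM /=; ring.
Qed.

End Aux.

Theorem corollary4p8 (R : rcfType) (n r : nat) (A : tensor4 R[i] n)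
  (lam : 'I_r -> R[i]) (E : 'I_r -> 'M[R[i]]_n) :
  CPS A ->
  is_rank_m A r ->
  (forall t, lam t \is Num.real) ->
  (forall t, lam t != 0) ->
  (forall t, (E t)^T = E t) ->
  (forall s t, mxinner (E s) (E t) = (s == t)%:R) ->
  (forall i j k l, A i j k l = \sum_(t < r) lam t * mxtens4 (E t) (cmxconj (E t)) i j k l) ->
  [/\
    (* (1) *)
    ((forall t, \rank (E t) = 1%N) ->
      exists (lam' : 'I_r -> R[i]) (p : 'I_r -> 'I_n -> R[i]),
        (forall t, lam' t \is Num.real) /\
        (forall s t, s != t -> \sum_(k < n) (p s k)^* * p t k = 0) /\
        (forall i j k l, A i j k l =
           \sum_(t < r) lam' t * vtens4 (p t) (p t) (fun x => (p t x)^*) (fun x => (p t x)^*) i j k l)),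
    (* (2) *)
    (exists k, is_cp_rank A k /\
       (r <= k <= r * (\max_(t < r) \rank (E t)) ^ 2)%N) &
    (* (3) *)
    (r = 1%N -> forall t, is_cp_rank A (\rank (E t) ^ 2)%N) ].
Proof.
move=> _ _ hreal hl hs ho H.
split.
- exact: part1 hreal hs ho H.
- pose Rk := (\max_(t < r) \rank (E t))%N.
  have hr t : (\rank (E t) <= Rk)%N by exact: (leq_bigmax t).
  have [k [hk hkN]] := cp_min (cp_upper hr H).
  exists k; split => //; apply/andP; split.
    exact: lower2 hl ho H hk.1.
  by rewrite -mulnn mulnA.
- move=> r1; subst r => t.
  have hr t' : (\rank (E t') <= \rank (E t))%N by rewrite (ord1 t') (ord1 t).
  have H' : forall i j k l, A i j k l = lam t * mxtens4 (E t) (cmxconj (E t)) i j k l.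
    by move=> i j k l; rewrite H big_ord1 (ord1 t).
  split.
    by have := cp_upper hr H; rewrite mul1n mulnn.
  move=> k' hk'; rewrite -mulnn.
  exact: lower3 (hl t) H' hk'.
Qed.
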